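(* Let $\Xi>1$, let $\rho:[1,\Xi]\to\mathbb{R}$ be continuous, let $\tilde\lambda\in\mathbb{C}$, and let $c>-1$ be a real number satisfying \[ 1=\sqrt{1+c}+\frac12\int_1^\Xi dT\,\frac{\rho(T)}{(\sqrt{1+c}+\sqrt{T+c})\sqrt{T+c}}. \] For $X\geq 1$ put $W(X):=\sqrt{X+c}+\frac12\int_1^\Xi dT\,\frac{\rho(T)}{(\sqrt{X+c}+\sqrt{T+c})\sqrt{T+c}}$, and for $X,Y\geq 1$ put \[ G(X|Y):=\frac{4\tilde\lambda^2}{\sqrt{X+c}\,\sqrt{Y+c}\,(\sqrt{X+c}+\sqrt{Y+c})^2},\qquad G(X,Y,Y):=8\tilde\lambda\frac{\partial}{\partial Y}\frac{W(X)-W(Y)}{X-Y}. \] Then $G(X|Y)$ solves the integral equation for the $(1{+}1)$-point function: for all $X,Y\in[1,\Xi]$ with $X\neq Y$, \[ W(X)\,G(X|Y)=-\tilde\lambda\,G(X,Y,Y)-\frac12\int_1^\Xi dT\,\rho(T)\,\frac{G(X|Y)-G(T|Y)}{X-T}. \]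
   Context: This is the Schwinger–Dyson equation for the large-matrix limit of the connected correlation function with two boundary components of length one in the $\Phi^3$ matrix model (two-dimensional case, with normalisation parameters $Z=1$, $\nu=0$); $G(X,Y,Y)$ is the corresponding 3-point function. Square roots are positive; the integrand at $T=X$ is understood by continuous extension. *)

(* Defs.v *)
From Stdlib Require Import Reals.
From Coquelicot Require Import Coquelicot.
Open Scope R_scope.

Definition Wfun (Xi c : R) (rho : R -> R) (X : R) : R :=
  sqrt (X + c) + / 2 * RInt (fun T => rho T /
     ((sqrt (X + c) + sqrt (T + c)) * sqrt (T + c))) 1 Xi.

Definition gr (c X Y : R) : R :=
  4 / (sqrt (X + c) * sqrt (Y + c) * (sqrt (X + c) + sqrt (Y + c)) ^ 2).

Definition G11 (lam : C) (c X Y : R) : C :=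
  (lam * lam * RtoC (gr c X Y))%C.

Definition G3 (Xi c : R) (rho : R -> R) (lam : C) (X Y : R) : C :=
  (RtoC 8 * lam * RtoC (Derive (fun Y' => ((Wfun Xi c rho X - Wfun Xi c rho Y') / (X - Y'))%R) Y))%C.

(* integrand (G(X|Y) - G(T|Y)) / (X - T), with its continuous extension at T = X,
   namely d/dX G(X|Y) = lam^2 * d/dX gr(c,X,Y). *)
Definition quotient_integrand (lam : C) (c X Y T : R) : C :=
  if Req_EM_T T X then (lam * lam * RtoC (Derive (fun x => gr c x Y) X))%C
  else ((G11 lam c X Y - G11 lam c T Y) / RtoC (X - T)%R)%C.

Definition continuous_on_Icc (a b : R) (f : R -> R) : Prop :=
  forall x, a <= x <= b ->
    filterlim f (within (fun t => a <= t <= b) (locally x)) (locally (f x)).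

(* Main.v *)
Require Import Defs.
From Stdlib Require Import Reals Lra.
From Coquelicot Require Import Coquelicot.
Open Scope R_scope.

Lemma locally_pos (a c : R) : 0 < a + c -> locally a (fun y => 0 < y + c).
Proof.
intros H. exists (mkposreal _ H). intros y Hy.
unfold ball in Hy; simpl in Hy; unfold AbsRing_ball, abs, minus, plus, opp in Hy; simpl in Hy.
revert Hy; unfold Rabs; destruct Rcase_abs; lra.
Qed.

Definition clamp (a b t : R) := Rmax a (Rmin b t).

Lemma clamp_cont (a b x : R) : filterlim (clamp a b) (locally x) (locally (clamp a b x)).
Proof.
apply filterlim_locally. intros eps. exists eps. intros y Hy.
unfold ball in *; simpl in *; unfold AbsRing_ball, abs, minus, plus, opp in *; simpl in *.
unfold clamp, Rmax, Rmin in *.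
revert Hy. repeat destruct Rle_dec; unfold Rabs; repeat destruct Rcase_abs; lra.
Qed.

Lemma r_cont (Xi : R) (rho : R -> R) : 1 <= Xi -> continuous_on_Icc 1 Xi rho ->
  forall x, continuous (fun t => rho (clamp 1 Xi t)) x.
Proof.
intros HXi Hc x. unfold continuous.
assert (Hx : 1 <= clamp 1 Xi x <= Xi) by (unfold clamp, Rmax, Rmin; repeat destruct Rle_dec; lra).
specialize (Hc _ Hx).
intros P HP. specialize (Hc P HP). unfold filtermap, within in Hc.
specialize (clamp_cont 1 Xi x _ Hc). unfold filtermap. 
apply filter_imp. intros y Hy. apply Hy.
unfold clamp, Rmax, Rmin; repeat destruct Rle_dec; lra.
Qed.

Lemma c2_sq1 (c x y : R) : 0 < x + c -> continuity_2d_pt (fun u v => sqrt (u + c)) x y.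
Proof.
intros H. apply (continuity_1d_2d_pt_comp sqrt (fun u v => u + c)).
apply continuity_pt_sqrt; lra.
apply continuity_2d_pt_plus. apply continuity_2d_pt_id1. apply continuity_2d_pt_const.
Qed.

Lemma c2_sq2 (c x y : R) : 0 < y + c -> continuity_2d_pt (fun u v => sqrt (v + c)) x y.
Proof.
intros H. apply (continuity_1d_2d_pt_comp sqrt (fun u v => v + c)).
apply continuity_pt_sqrt; lra.
apply continuity_2d_pt_plus. apply continuity_2d_pt_id2. apply continuity_2d_pt_const.
Qed.

Lemma c2_r (r : R -> R) x y : continuous r y -> continuity_2d_pt (fun u v => r v) x y.
Proof.
intros H. apply (continuity_1d_2d_pt_comp r (fun u v => v)).
apply continuity_pt_filterlim. exact H. apply continuity_2d_pt_id2.
Qed.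

Lemma exR (r k : R -> R) a b : a <= b -> (forall x, continuous r x) ->
  (forall T, a <= T <= b -> ex_derive k T) -> ex_RInt (fun T => r T * k T) a b.
Proof.
intros Hab Hr Hk. apply (ex_RInt_continuous (V:=R_CompleteNormedModule)). intros z Hz.
rewrite Rmin_left in Hz by lra. rewrite Rmax_right in Hz by lra.
apply (continuous_mult r k). apply Hr. apply (ex_derive_continuous (K:=R_AbsRing) (V:=R_NormedModule)), Hk; lra.
Qed.

Lemma RInt_comb4 (g1 g2 g3 g4 : R -> R) a b k1 k2 k3 k4 :
  ex_RInt g1 a b -> ex_RInt g2 a b -> ex_RInt g3 a b -> ex_RInt g4 a b ->
  RInt (fun T => k1*g1 T + k2*g2 T + k3*g3 T + k4*g4 T) a b
  = k1*RInt g1 a b + k2*RInt g2 a b + k3*RInt g3 a b + k4*RInt g4 a b.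
Proof.
intros H1 H2 H3 H4. apply is_RInt_unique.
apply (is_RInt_plus (fun T => k1*g1 T + k2*g2 T + k3*g3 T) (fun T => k4 * g4 T)).
apply (is_RInt_plus (fun T => k1*g1 T + k2*g2 T) (fun T => k3 * g3 T)).
apply (is_RInt_plus (fun T => k1*g1 T) (fun T => k2 * g2 T)).
- apply (is_RInt_scal g1). apply (RInt_correct (V:=R_CompleteNormedModule)); assumption.
- apply (is_RInt_scal g2). apply (RInt_correct (V:=R_CompleteNormedModule)); assumption.
- apply (is_RInt_scal g3). apply (RInt_correct (V:=R_CompleteNormedModule)); assumption.
- apply (is_RInt_scal g4). apply (RInt_correct (V:=R_CompleteNormedModule)); assumption.
Qed.

Lemma RInt_C_scal (g : R -> R) (w : C) a b : ex_RInt g a b ->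
  RInt (V:=C_R_CompleteNormedModule) (fun T => scal (g T) w) a b = (RtoC (RInt g a b) * w)%C.
Proof.
intros H. apply is_RInt_unique.
destruct w as [w1 w2].
replace (RtoC (RInt g a b) * (w1, w2))%C with (RInt g a b * w1, RInt g a b * w2)
  by (unfold RtoC, Cmult; simpl; f_equal; ring).
apply (is_RInt_fct_extend_pair (U:=R_NormedModule) (V:=R_NormedModule) (fun T => scal (g T) (w1,w2))).
- simpl. apply (is_RInt_ext (fun T => g T * w1)). intros; reflexivity.
  replace (RInt g a b * w1) with (scal w1 (RInt g a b)) by (unfold scal; simpl; unfold mult; simpl; ring).
  apply (is_RInt_ext (fun T => scal w1 (g T))). intros; unfold scal; simpl; unfold mult; simpl; ring.
  apply (is_RInt_scal (V:=R_NormedModule)). apply (RInt_correct (V:=R_CompleteNormedModule)), H.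
- simpl. apply (is_RInt_ext (fun T => g T * w2)). intros; reflexivity.
  replace (RInt g a b * w2) with (scal w2 (RInt g a b)) by (unfold scal; simpl; unfold mult; simpl; ring).
  apply (is_RInt_ext (fun T => scal w2 (g T))). intros; unfold scal; simpl; unfold mult; simpl; ring.
  apply (is_RInt_scal (V:=R_NormedModule)). apply (RInt_correct (V:=R_CompleteNormedModule)), H.
Qed.

Definition grst s t := 4 / (s * t * ((s + t) * (s + t))).
Definition Kst s t u := -4 / t * (s*s + s*u + u*u + 2*t*(s+u) + t*t) /
   ((s+u)*s*u*((s+t)*(s+t))*((u+t)*(u+t))).
Definition Kc c X Y T := Kst (sqrt (X+c)) (sqrt (Y+c)) (sqrt (T+c)).

Lemma gr_eq c X Y : gr c X Y = grst (sqrt (X+c)) (sqrt (Y+c)).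
Proof. unfold gr, grst. f_equal. ring. Qed.

Lemma sqrt_pos' x : 0 < x -> 0 < sqrt x.
Proof. apply sqrt_lt_R0. Qed.

Lemma quot_real c X Y T : 0 < X + c -> 0 < Y + c -> 0 < T + c -> X <> T ->
  (gr c X Y - gr c T Y) / (X - T) = Kc c X Y T.
Proof.
intros HX HY HT HXT. rewrite !gr_eq. unfold Kc.
assert (Hs := sqrt_pos' _ HX). assert (Ht := sqrt_pos' _ HY). assert (Hu := sqrt_pos' _ HT).
assert (Es := sqrt_sqrt (X+c) ltac:(lra)). assert (Eu := sqrt_sqrt (T+c) ltac:(lra)).
set (s := sqrt (X+c)) in *. set (t := sqrt (Y+c)) in *. set (u := sqrt (T+c)) in *.
assert (Hsu : s - u <> 0). { intros E. apply HXT. assert (s = u) by lra. nra. }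
replace (X - T) with ((s - u) * (s + u)) by nra.
unfold grst, Kst. field. repeat split; lra.
Qed.

Lemma deriv_gr c X Y : 0 < X + c -> 0 < Y + c ->
  Derive (fun x => gr c x Y) X = Kc c X Y X.
Proof.
intros HX HY. apply is_derive_unique. unfold gr, Kc.
assert (Hs := sqrt_pos' _ HX). assert (Ht := sqrt_pos' _ HY).
auto_derive.
- repeat split; try lra; apply Rgt_not_eq; repeat apply Rmult_lt_0_compat; lra.
- set (s := sqrt (X+c)) in *. set (t := sqrt (Y+c)) in *. unfold Kst. field. lra.
Qed.

Lemma C_quot (w : C) a b d : d <> 0 ->
  ((w * RtoC a - w * RtoC b) / RtoC d)%C = (w * RtoC ((a - b) / d))%C.
Proof.
intros Hd. destruct w as [w1 w2]. unfold Cdiv, Cinv, Cminus, Cmult, Cplus, Copp, RtoC; simpl.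
f_equal; field; lra.
Qed.

Lemma quotient_eq lam c X Y T : 0 < X + c -> 0 < Y + c -> 0 < T + c ->
  quotient_integrand lam c X Y T = (lam * lam * RtoC (Kc c X Y T))%C.
Proof.
intros HX HY HT. unfold quotient_integrand.
destruct Req_EM_T as [E|E].
- subst T. rewrite deriv_gr by lra. reflexivity.
- unfold G11. rewrite C_quot by lra. rewrite quot_real; auto.
Qed.

Definition kf s u := / ((s + u) * u).
Definition kd t u := - / ((t + u) * (t + u) * u * (2 * t)).

Lemma pointwise s t u : 0 < s -> 0 < t -> 0 < u -> s <> t ->
  (grst s t / 2 + 4 / ((s*s - t*t)*(s*s-t*t))) * kf s u
  + (- 4 / ((s*s - t*t)*(s*s-t*t))) * kf t u
  + (- 4 / (s*s - t*t)) * kd t u + / 2 * Kst s t u = 0.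
Proof.
intros Hs Ht Hu Hst. unfold grst, kf, kd, Kst.
assert (s - t <> 0) by lra.
replace (s*s - t*t) with ((s-t)*(s+t)) by ring.
field. repeat split; lra.
Qed.

Lemma deriv_h (A : R -> R) WX X Y c dA : is_derive A Y dA -> 0 < Y + c -> X <> Y ->
 Derive (fun y => (WX - (sqrt (y + c) + / 2 * A y)) / (X - y)) Y =
 ((WX - (sqrt (Y+c) + /2 * A Y)) - (X - Y) * (/ (2 * sqrt (Y+c)) + /2 * dA)) / ((X - Y) * (X - Y)).
Proof.
intros HA HY HXY. apply is_derive_unique.
assert (Ht := sqrt_pos' _ HY).
auto_derive.
- repeat split; try lra. exists dA; exact HA.
- replace (Derive (fun x => A x) Y) with dA by (symmetry; apply is_derive_unique; exact HA). field. lra.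
Qed.

Lemma dkf (r : R -> R) c u v : 0 < u + c -> 0 < v + c ->
  Derive (fun z => r v / ((sqrt (z + c) + sqrt (v + c)) * sqrt (v + c))) u
  = r v * kd (sqrt (u + c)) (sqrt (v + c)).
Proof.
intros Hu Hv. apply is_derive_unique.
assert (Ha := sqrt_pos' _ Hu). assert (Hb := sqrt_pos' _ Hv).
auto_derive.
- repeat split; try lra; apply Rgt_not_eq; repeat apply Rmult_lt_0_compat; lra.
- unfold kd. field. lra.
Qed.

Lemma exkf (r : R -> R) c u v : 0 < u + c -> 0 < v + c ->
  ex_derive (fun z => r v / ((sqrt (z + c) + sqrt (v + c)) * sqrt (v + c))) u.
Proof.
intros Hu Hv.
assert (Ha := sqrt_pos' _ Hu). assert (Hb := sqrt_pos' _ Hv).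
auto_derive.
repeat split; try lra; apply Rgt_not_eq; repeat apply Rmult_lt_0_compat; lra.
Qed.

Lemma loc2d_pos c x y : 0 < x + c -> 0 < y + c ->
  locally_2d (fun u v => 0 < u + c /\ 0 < v + c) x y.
Proof.
intros Hx Hy. assert (H : 0 < Rmin (x + c) (y + c)) by (apply Rmin_pos; lra).
exists (mkposreal _ H). simpl. intros u v Hu Hv.
assert (Rmin (x+c) (y+c) <= x + c) by apply Rmin_l.
assert (Rmin (x+c) (y+c) <= y + c) by apply Rmin_r.
revert Hu Hv; unfold Rabs; repeat destruct Rcase_abs; intros; lra.
Qed.

Lemma derive_A (r : R -> R) c Xi Y : (forall x, continuous r x) -> 1 < Xi -> -1 < c -> 0 < Y + c ->
  is_derive (fun y => RInt (fun T => r T / ((sqrt (y + c) + sqrt (T + c)) * sqrt (T + c))) 1 Xi) Y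
    (RInt (fun T => r T * kd (sqrt (Y + c)) (sqrt (T + c))) 1 Xi).
Proof.
intros Hr HXi Hc HY.
assert (E : RInt (fun T => r T * kd (sqrt (Y + c)) (sqrt (T + c))) 1 Xi =
  RInt (fun T => Derive (fun z => r T / ((sqrt (z + c) + sqrt (T + c)) * sqrt (T + c))) Y) 1 Xi).
{ apply RInt_ext. rewrite Rmin_left, Rmax_right by lra. intros x Hx. rewrite dkf; auto; lra. }
rewrite E.
apply (is_derive_RInt_param (fun y T => r T / ((sqrt (y + c) + sqrt (T + c)) * sqrt (T + c)))).
- apply (filter_imp (fun y => 0 < y + c)); [|apply locally_pos; auto].
  intros y Hy t Ht. rewrite Rmin_left, Rmax_right in Ht by lra. apply exkf; lra.
- intros t Ht. rewrite Rmin_left, Rmax_right in Ht by lra.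
  apply (continuity_2d_pt_ext_loc (fun u v => r v * kd (sqrt (u + c)) (sqrt (v + c)))).
  { apply (locally_2d_impl (fun u v => 0 < u + c /\ 0 < v + c)).
    - apply locally_2d_forall. intros u v [Hu Hv]. rewrite dkf; auto.
    - apply loc2d_pos; lra. }
  unfold kd.
  apply continuity_2d_pt_mult. apply c2_r, Hr.
  apply continuity_2d_pt_opp. apply continuity_2d_pt_inv.
  + repeat apply continuity_2d_pt_mult;
      try apply continuity_2d_pt_plus; try apply continuity_2d_pt_const;
      try (apply c2_sq1; lra); try (apply c2_sq2; lra).
  + assert (Ha := sqrt_pos' (Y + c) HY). assert (Hb := sqrt_pos' (t + c) ltac:(lra)).
    apply Rgt_not_eq; repeat apply Rmult_lt_0_compat; lra.
- apply (filter_imp (fun y => 0 < y + c)); [|apply locally_pos; auto].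
  intros y Hy.
  apply (ex_RInt_ext (fun T => r T * / ((sqrt (y + c) + sqrt (T + c)) * sqrt (T + c)))).
  { intros; reflexivity. }
  apply exR; auto; try lra. intros T HT.
  assert (Ha := sqrt_pos' (y + c) Hy). assert (Hb := sqrt_pos' (T + c) ltac:(lra)).
  auto_derive. repeat split; try lra; apply Rgt_not_eq; repeat apply Rmult_lt_0_compat; lra.
Qed.

Theorem proposition6 (Xi : R) (rho : R -> R) (lam : C) (c : R) :
  1 < Xi ->
  continuous_on_Icc 1 Xi rho ->
  -1 < c ->
  1 = sqrt (1 + c) + / 2 * RInt (fun T => rho T /
        ((sqrt (1 + c) + sqrt (T + c)) * sqrt (T + c))) 1 Xi ->
  forall X Y : R, 1 <= X <= Xi -> 1 <= Y <= Xi -> X <> Y ->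
    (RtoC (Wfun Xi c rho X) * G11 lam c X Y)%C =
    (- lam * G3 Xi c rho lam X Y
     - RtoC (/ 2) * RInt (V := C_R_CompleteNormedModule)
         (fun T => scal (rho T) (quotient_integrand lam c X Y T)) 1 Xi)%C.
Proof.
intros HXi Hrho Hc _ X Y HX HY HXY.
set (r := fun t => rho (clamp 1 Xi t)).
assert (Hr : forall x, continuous r x) by (apply r_cont; auto; lra).
assert (Hrr : forall t, 1 <= t <= Xi -> r t = rho t).
{ intros t Ht. unfold r, clamp. f_equal. rewrite Rmin_right by lra. rewrite Rmax_right by lra. reflexivity. }
assert (HW : forall y, Wfun Xi c rho y = Wfun Xi c r y).
{ intros y. unfold Wfun. f_equal. f_equal. apply RInt_ext. rewrite Rmin_left, Rmax_right by lra.
  intros T HT. rewrite Hrr by lra. reflexivity. }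
unfold G3. rewrite HW.
rewrite (Derive_ext _ (fun Y' => (Wfun Xi c r X - Wfun Xi c r Y') / (X - Y'))) by (intros; rewrite !HW; reflexivity).
assert (HXc : 0 < X + c) by lra. assert (HYc : 0 < Y + c) by lra.
rewrite (RInt_ext (V:=C_R_CompleteNormedModule) _ (fun T => scal (r T * Kc c X Y T) (lam*lam)%C)).
2:{ rewrite Rmin_left, Rmax_right by lra. intros T HT. rewrite Hrr by lra.
    rewrite quotient_eq by lra. destruct lam as [l1 l2]. unfold scal. simpl.
    unfold prod_scal, Cmult, RtoC; simpl. unfold scal; simpl; unfold mult; simpl. f_equal; ring. }
assert (Hs := sqrt_pos' _ HXc). assert (Ht := sqrt_pos' _ HYc).
assert (Es := sqrt_sqrt (X+c) ltac:(lra)). assert (Et := sqrt_sqrt (Y+c) ltac:(lra)).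
assert (HexK : ex_RInt (fun T => r T * Kc c X Y T) 1 Xi).
{ apply exR; auto; try lra. intros T HT. unfold Kc, Kst.
  assert (Hu := sqrt_pos' (T + c) ltac:(lra)).
  auto_derive. repeat split; try lra; apply Rgt_not_eq; repeat apply Rmult_lt_0_compat; lra. }
rewrite (RInt_C_scal _ _ _ _ HexK).
set (Q := RInt (fun T => r T * Kc c X Y T) 1 Xi).
pose (A := fun y => RInt (fun T => r T / ((sqrt (y + c) + sqrt (T + c)) * sqrt (T + c))) 1 Xi).
set (dA := RInt (fun T => r T * kd (sqrt (Y + c)) (sqrt (T + c))) 1 Xi).
assert (HA : is_derive A Y dA) by (apply derive_A; auto).
assert (HD := deriv_h A (Wfun Xi c r X) X Y c dA HA HYc HXY).
change (Derive (fun Y' => (Wfun Xi c r X - Wfun Xi c r Y') / (X - Y')) Y) with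
  (Derive (fun y => (Wfun Xi c r X - (sqrt (y + c) + / 2 * A y)) / (X - y)) Y).
rewrite HD. clear HD.
change (Wfun Xi c r X) with (sqrt (X + c) + / 2 * A X).
assert (HAX : A X = RInt (fun T => r T * kf (sqrt (X + c)) (sqrt (T + c))) 1 Xi) by reflexivity.
assert (HAY : A Y = RInt (fun T => r T * kf (sqrt (Y + c)) (sqrt (T + c))) 1 Xi) by reflexivity.
assert (Hex : forall y, 0 < y + c -> ex_RInt (fun T => r T * kf (sqrt (y + c)) (sqrt (T + c))) 1 Xi).
{ intros y Hy. apply exR; auto; try lra. intros T HT. unfold kf.
  assert (Hu := sqrt_pos' (T + c) ltac:(lra)). assert (Hv := sqrt_pos' (y + c) Hy).
  auto_derive. repeat split; try lra; apply Rgt_not_eq; repeat apply Rmult_lt_0_compat; lra. }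
assert (Hexd : ex_RInt (fun T => r T * kd (sqrt (Y + c)) (sqrt (T + c))) 1 Xi).
{ apply exR; auto; try lra. intros T HT. unfold kd.
  assert (Hu := sqrt_pos' (T + c) ltac:(lra)).
  auto_derive. repeat split; try lra; apply Rgt_not_eq; repeat apply Rmult_lt_0_compat; lra. }
set (s := sqrt (X + c)) in *. set (t := sqrt (Y + c)) in *.
assert (Hst : s <> t). { intros E. apply HXY. assert (s * s = t * t) by (rewrite E; reflexivity). lra. }
set (a1 := grst s t / 2 + 4 / ((s*s - t*t)*(s*s-t*t))).
set (a2 := - 4 / ((s*s - t*t)*(s*s-t*t))).
set (a3 := - 4 / (s*s - t*t)).
assert (Hlin := RInt_comb4 _ _ _ _ 1 Xi a1 a2 a3 (/2) (Hex X HXc) (Hex Y HYc) Hexd HexK).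
fold s t in Hlin. rewrite <- HAX, <- HAY in Hlin. fold dA Q in Hlin.
assert (Hz : RInt (fun T => a1 * (r T * kf s (sqrt (T + c))) + a2 * (r T * kf t (sqrt (T + c)))
   + a3 * (r T * kd t (sqrt (T + c))) + / 2 * (r T * Kc c X Y T)) 1 Xi = 0).
{ rewrite (RInt_ext (V:=R_CompleteNormedModule) _ (fun _ => 0)). rewrite RInt_const. apply (scal_zero_r (K:=R_Ring) (V:=R_ModuleSpace)).
  rewrite Rmin_left, Rmax_right by lra. intros T HT. match goal with |- @eq _ ?a ?b => change (@eq R a b) end.
  assert (Hu := sqrt_pos' (T + c) ltac:(lra)).
  transitivity (r T * (a1 * kf s (sqrt (T + c)) + a2 * kf t (sqrt (T + c)) + a3 * kd t (sqrt (T + c))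
     + / 2 * Kst s t (sqrt (T + c)))). { unfold Kc. fold s t. ring. }
  unfold a1, a2, a3. rewrite pointwise; auto. ring. }
rewrite Hz in Hlin.
assert (HXY' : X - Y = s * s - t * t) by lra.
rewrite HXY'.
unfold G11. rewrite gr_eq. fold s t. set (D := (s + / 2 * A X - (t + / 2 * A Y) - (s * s - t * t) * (/ (2 * t) + / 2 * dA)) /
    ((s * s - t * t) * (s * s - t * t))).
assert (HQ : Q = - 2 * (a1 * A X + a2 * A Y + a3 * dA)) by lra.
assert (Hreal : (s + / 2 * A X) * grst s t = - 8 * D - / 2 * Q).
{ rewrite HQ. unfold D, a1, a2, a3, grst.
  assert (s - t <> 0) by lra.
  replace (s*s - t*t) with ((s-t)*(s+t)) by ring.
  field. repeat split; lra. }
clearbody D. clear HQ. clearbody Q.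
assert (HQ' : Q = - 2 * ((s + / 2 * A X) * grst s t) - 16 * D) by lra.
rewrite HQ'.
set (WX := s + / 2 * A X) in *. clearbody WX.

destruct lam as [l1 l2]. unfold Cmult, Cminus, Copp, Cplus, RtoC; simpl.
f_equal; match goal with |- @eq _ ?a ?b => change (@eq R a b) end; field.
Qed.
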